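(* Every $2$-uniform affine Hjelmslev plane is isomorphic to an incidence structure produced by the Affine Construction (Algorithm 2) described in the context, for a suitable integer $m\ge 2$, affine plane $\mathcal{A}$ of order $m$, affine planes $\mathcal{A}_P$, orthogonal arrays $\mathcal{O}_l$, and admissible choices $\pi,\beta$.
   Context: An orthogonal array $OA(2,k,v)$ is a $v^2\times k$ array with entries from a $v$-element symbol set such that in any two columns every ordered pair of symbols occurs in exactly one row. An affine plane of order $m$ has $m^2$ points, $m$ points per line, $m+1$ lines through each point, and its lines split into $m+1$ parallel classes, each consisting of $m$ pairwise disjoint lines covering all points. Affine Construction (Algorithm 2). Let $\mathcal{A}$ be an affine plane of order $m$. For each point $P$ of $\mathcal{A}$ let $\mathcal{A}_P$ be an affine plane of order $m$ (not necessarily all the same). For each line $l$ of $\mathcal{A}$ let $\mathcal{O}_l$ be an $OA(2,m,m)$ on a symbol set $\Sigma_l$ whose $m$ columns are labelled bijectively by the $m$ points of $l$. For each incident pair $P\in l$ choose a parallel class $\pi(P,l)$ of $\mathcal{A}_P$ such that, for each fixed $P$, the map $l\mapsto\pi(P,l)$ is a bijection from the $m+1$ lines of $\mathcal{A}$ through $P$ to the $m+1$ parallel classes of $\mathcal{A}_P$; and choose a bijection $\beta_{P,l}$ from $\Sigma_l$ to the $m$ lines of $\pi(P,l)$. The points of the constructed structure are the pairs $(P,x)$ with $P$ a point of $\mathcal{A}$ and $x$ a point of $\mathcal{A}_P$. For each line $l$ of $\mathcal{A}$ and each row $r$ of $\mathcal{O}_l$, there is the line $\bigcup_{P\in l}\{(P,x):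 x\in \beta_{P,l}(\mathcal{O}_l(r,P))\}$, where $\mathcal{O}_l(r,P)$ is the entry in row $r$ and the column labelled $P$. Incidence is membership. Affine Hjelmslev plane: an incidence structure $\mathcal{H}$ such that (1) any two points are incident with at least one line; (2) two lines meeting in more than one point are called neighbours ($g\sim h$), and two points incident with more than one common line are called neighbours ($P\sim Q$), the relations being reflexively extended; (3) there is an incidence-preserving surjection $\phi$ from $\mathcal{H}$ onto an ordinary affine plane with $\phi(P)=\phi(Q)\iff P\sim Q$, $\phi(g)=\phi(h)\iff g\sim h$, and lines $g,h$ with no common point satisfying $\phi(g)\parallel\phi(h)$. Uniformity: a $1$-uniform affine Hjelmslev plane is an ordinary affine plane. For a point $P$, the point-neighbourhood restriction $\bar P$ is the incidence structure whose points are the points $Q\sim P$ and whose lines are the nonempty sets $g\cap\bar P$ for lines $g$ of $\mathcal{H}$. An affine (or projective) Hjelmslev plane is $n$-uniform if for every point $P$, $\bar P$ is an $(n-1)$-uniform affine Hjelmslev plane, and every line of $\bar P$ is the restriction of the same number of lines of $\mathcal{H}$. *)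

(* Defs.v *)
From HB Require Import structures.
From mathcomp Require Import all_boot.
Set Implicit Arguments. Unset Strict Implicit. Unset Printing Implicit Defensive.

Record IS := MkIS { ipt : finType; iln : finType; inc : ipt -> iln -> bool }.
Arguments inc {i}.

Definition surj (A B : Type) (f : A -> B) := forall y, exists x, f x = y.

Definition par (S : IS) (l l' : iln S) : bool :=
  (l == l') || [forall P, ~~ (inc P l && inc P l')].

Definition affine_plane (S : IS) : Prop :=
  [/\ (forall P Q : ipt S, P != Q -> exists! l, inc P l && inc Q l),
      (forall (P : ipt S) (l : iln S), exists! l', inc P l' && par l l') &
      (exists P Q R : ipt S, [/\ P != Q, Q != R, P != R &
          ~ exists l, [&& inc P l, inc Q l & inc R l]])].

Definition affine_plane_order (S : IS) (m : nat) : Prop :=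
  affine_plane S /\ forall l : iln S, #|[set P | inc P l]| = m.

Definition parallel_class (S : IS) (C : {set iln S}) : Prop :=
  exists l, C = [set l' | par l l'].

Definition nbp (S : IS) (P Q : ipt S) : bool :=
  (P == Q) || (1 < #|[set g | inc P g && inc Q g]|).
Definition nbl (S : IS) (g h : iln S) : bool :=
  (g == h) || (1 < #|[set P | inc P g && inc P h]|).

Definition AH_plane (H : IS) : Prop :=
  (forall P Q : ipt H, exists g, inc P g && inc Q g) /\
  exists (A : IS) (fp : ipt H -> ipt A) (fl : iln H -> iln A),
    [/\ affine_plane A, surj fp, surj fl &
        (forall P g, inc P g -> inc (fp P) (fl g))] /\
    [/\ (forall P Q, fp P = fp Q <-> nbp P Q),
        (forall g h, fl g = fl h <-> nbl g h) &
        (forall g h, (forall P, ~~ (inc P g && inc P h)) -> par (fl g) (fl h))].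

Definition nb_pt (H : IS) (P : ipt H) : finType := {Q : ipt H | nbp P Q}.
Definition restr_line (H : IS) (P : ipt H) (g : iln H) : {set nb_pt P} :=
  [set Q : nb_pt P | inc (val Q) g].
Definition nb_ln (H : IS) (P : ipt H) : finType :=
  {S : {set nb_pt P} | (S != set0) && [exists g, S == restr_line P g]}.
Definition restr (H : IS) (P : ipt H) : IS :=
  @MkIS (nb_pt P) (nb_ln P) (fun Q S => Q \in val S).

Definition two_uniform_AH (H : IS) : Prop :=
  AH_plane H /\
  forall P : ipt H, affine_plane (restr P) /\
    exists c, forall S : iln (restr P),
      #|[set g | restr_line P g == val S]| = c.

Definition isomorphic (S T : IS) : Prop :=
  exists (f : ipt S -> ipt T) (g : iln S -> iln T),
    [/\ bijective f, bijective g & forall P l, inc P l = inc (f P) (g l)].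

Definition construction (A : IS) (AP : ipt A -> IS)
  (Sym Row : iln A -> finType) (O : forall l, Row l -> ipt A -> Sym l)
  (beta : forall (P : ipt A) (l : iln A), Sym l -> iln (AP P)) : IS :=
  @MkIS {P : ipt A & ipt (AP P)} {l : iln A & Row l}
    (fun X L => inc (tag X) (tag L) &&
        inc (tagged X) (beta (tag X) (tag L) (O (tag L) (tagged L) (tag X)))).

Definition admissible (m : nat) (A : IS) (AP : ipt A -> IS)
  (Sym Row : iln A -> finType) (O : forall l, Row l -> ipt A -> Sym l)
  (pi : forall P : ipt A, iln A -> {set iln (AP P)})
  (beta : forall (P : ipt A) (l : iln A), Sym l -> iln (AP P)) : Prop :=
  [/\ 2 <= m, affine_plane_order A m &
      (forall P, affine_plane_order (AP P) m)] /\
  [/\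
      (* O l is an OA(2,m,m) on the symbol set Sym l, columns = points of l *)
      (forall l, [/\ #|Sym l| = m, #|Row l| = m * m &
         forall P Q, P != Q -> inc P l -> inc Q l ->
           forall s t : Sym l, exists! r, O l r P = s /\ O l r Q = t]),
      (forall P, [/\ forall l, inc P l -> parallel_class (pi P l),
         forall l l', inc P l -> inc P l' -> pi P l = pi P l' -> l = l' &
         forall C, parallel_class C -> exists l, inc P l /\ pi P l = C]) &
      (forall P l, inc P l -> injective (beta P l) /\
         forall y, y \in pi P l <-> exists s, beta P l s = y)].

(* Main.v *)
Require Import Defs.
From HB Require Import structures.
From mathcomp Require Import all_boot.
Set Implicit Arguments. Unset Strict Implicit. Unset Printing Implicit Defensive.

Section Aff.
Variable S : IS.
Hypothesis hS : affine_plane S.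
Implicit Types (P Q R X Y Z : ipt S) (l k a b c : iln S).

Lemma join_uniq P Q l l' : P != Q -> inc P l -> inc Q l -> inc P l' -> inc Q l' -> l = l'.
Proof.
case: hS => hj _ _ hPQ Pl Ql Pl' Ql'.
case: (hj P Q hPQ) => l0 [_ u].
have e1 : l0 = l by apply: u; rewrite Pl Ql.
have e2 : l0 = l' by apply: u; rewrite Pl' Ql'.
by rewrite -e1 -e2.
Qed.

Lemma join_ex P Q : P != Q -> exists l, inc P l && inc Q l.
Proof. by case: hS => hj _ _ hPQ; case: (hj P Q hPQ) => l0 [h _]; exists l0. Qed.

Lemma par_ex P l : exists l', inc P l' && par l l'.
Proof. by case: hS => _ hp _; case: (hp P l) => l0 [h _]; exists l0. Qed.

Lemma par_uniq P l a b : inc P a -> par l a -> inc P b -> par l b -> a = b.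
Proof.
case: hS => _ hp _ Pa la Pb lb.
case: (hp P l) => l0 [_ u].
have e1 : l0 = a by apply: u; rewrite Pa la.
have e2 : l0 = b by apply: u; rewrite Pb lb.
by rewrite -e1 -e2.
Qed.

Lemma par_refl l : par l l.
Proof. by rewrite /par eqxx. Qed.

Lemma par_sym a b : par a b = par b a.
Proof.
rewrite /par eq_sym; congr (_ || _).
by apply: eq_forallb => P; rewrite andbC.
Qed.

Lemma par_meet_eq P a b : par a b -> inc P a -> inc P b -> a = b.
Proof.
case/orP => [/eqP // | /forallP h] Pa Pb.
by have := h P; rewrite Pa Pb.
Qed.

Lemma par_trans a b c : par a b -> par b c -> par a c.
Proof.
move=> ab bc; case: (a =P c) => [->|ne]; first exact: par_refl.
apply/orP; right; apply/forallP => P; apply/negP => /andP [Pa Pc].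
apply: ne; apply: (@par_uniq P b) => //; by rewrite par_sym.
Qed.

Lemma nopar_meet a b : ~~ par a b -> exists P, inc P a && inc P b.
Proof.
by rewrite negb_or => /andP [_ /forallPn [P]]; rewrite negbK => h; exists P.
Qed.

Lemma meet_nopar P a b : inc P a -> inc P b -> a != b -> ~~ par a b.
Proof. by move=> Pa Pb ne; apply/negP => h; move: ne; rewrite (par_meet_eq h Pa Pb) eqxx. Qed.

Lemma point_off l : exists P, ~~ inc P l.
Proof.
case: hS => _ _ [P [Q [R [_ _ _ h]]]].
case PL: (inc P l); last by exists P; rewrite PL.
case QL: (inc Q l); last by exists Q; rewrite QL.
case RL: (inc R l); last by exists R; rewrite RL.
by exfalso; apply: h; exists l; rewrite PL QL RL.
Qed.

Lemma point_ne P : exists Q, Q != P.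
Proof.
case: hS => _ _ [P1 [Q1 [R1 [h1 _ _ _]]]].
case: (P1 =P P) => [e|ne]; last by exists P1; apply/eqP.
by exists Q1; rewrite -e eq_sym.
Qed.

Lemma line_nonempty l : exists X, inc X l.
Proof.
case: (boolP [exists X, inc X l]) => [/existsP //| /existsPn h].
case: hS => _ _ [P [Q [R [PQ QR PR nc]]]].
have parall k : par l k.
  by apply/orP; right; apply/forallP => X; rewrite (negbTE (h X)).
case: (join_ex PQ) => a /andP [Pa Qa].
case: (join_ex PR) => b /andP [Pb Rb].
have e : a = b by apply: (par_uniq Pa (parall a) Pb (parall b)).
by exfalso; apply: nc; exists a; rewrite Pa Qa e Rb.
Qed.

Lemma line_two X l : inc X l -> exists Y, inc Y l && (Y != X).
Proof.
move=> Xl.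
case: (boolP [exists Y, inc Y l && (Y != X)]) => [/existsP //| /existsPn h0].
have onlyX Y : inc Y l -> Y = X.
  by move=> Yl; apply/eqP; move: (h0 Y); rewrite Yl /= negbK.
have parl k : ~~ inc X k -> par l k.
  move=> Xk; apply/orP; right; apply/forallP => W; apply/negP => /andP [Wl Wk].
  by move: Xk; rewrite -(onlyX W Wl) Wk.
case: (point_ne X) => Y0 Y0X.
have Y0l : ~~ inc Y0 l by apply/negP => /onlyX /eqP; rewrite (negbTE Y0X).
case: (par_ex Y0 l) => k /andP [Y0k lk].
have Xk : ~~ inc X k.
  by apply/negP => Xk; move: Y0l; rewrite (par_meet_eq lk Xl Xk) Y0k.
case: (join_ex Y0X) => mm /andP [Y0m Xm].
have all2 Z : inc Z mm || inc Z k.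
  case: (Z =P Y0) => [->|ZY]; first by rewrite Y0k orbT.
  have : Z != Y0 by apply/eqP.
  move=> /join_ex [j /andP [Zj Y0j]].
  case Xj: (inc X j).
    have Y0X' : Y0 != X by [].
    by rewrite -(join_uniq Y0X' Y0j Xj Y0m Xm) Zj.
  have lj : par l j by apply: parl; rewrite Xj.
  by rewrite -(par_uniq Y0j lj Y0k lk) Zj orbT.
case: (boolP [exists U, inc U k && ~~ inc U mm]) => [/existsP [U /andP [Uk Um]] | /existsPn hU].
  case: (par_ex U mm) => j /andP [Uj mj].
  have jne : mm != j by apply/eqP => e; move: Um; rewrite e Uj.
  have disj W : inc W mm -> ~~ inc W j.
    by move=> Wm; apply/negP => Wj; move: jne; rewrite (par_meet_eq mj Wm Wj) eqxx.
  have lj : par l j by apply: parl; apply: disj.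
  have e := par_uniq Uj lj Uk lk.
  by move: (disj Y0 Y0m); rewrite e Y0k.
have inm Z : inc Z mm.
  case/orP: (all2 Z) => // Zk.
  by move: (hU Z); rewrite Zk /= negbK.
case: hS => _ _ [P [Q [R [_ _ _ nc]]]].
by exfalso; apply: nc; exists mm; rewrite !inm.
Qed.

Definition pts l := [set X | inc X l].
Definition cls k := [set k' | par k k'].

Lemma class_card l k : ~~ par l k -> #|cls k| = #|pts l|.
Proof.
move=> nlk.
pose f P := xchoose (par_ex P k).
have fP P : inc P (f P) && par k (f P) by apply: (xchooseP (par_ex P k)).
have finj : {in pts l &, injective f}.
  move=> P Q; rewrite !inE => Pl Ql e.
  apply/eqP; apply/negP => /negP PQ.
  case/andP: (fP P) => Pf kf; case/andP: (fP Q) => Qf _.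
  rewrite -e in Qf.
  have ef := join_uniq PQ Pf Qf Pl Ql.
  by move: nlk; rewrite par_sym -ef kf.
rewrite -(card_in_imset finj); apply: eq_card => k'; rewrite !inE.
apply/idP/imsetP.
  move=> kk'.
  have nlk' : ~~ par l k'.
    apply/negP => lk'; move: nlk; rewrite (par_trans lk' _) //.
    by rewrite par_sym.
  case: (nopar_meet nlk') => P /andP [Pl Pk'].
  exists P; first by rewrite inE.
  case/andP: (fP P) => Pf kf.
  by apply: (par_uniq Pk' kk' Pf kf).
by case=> P _ ->; case/andP: (fP P).
Qed.

Lemma line_size_const l l' : #|pts l| = #|pts l'|.
Proof.
suff [k [h1 h2]] : exists k, ~~ par l k /\ ~~ par l' k.
  by rewrite -(class_card h1) -(class_card h2).
case: (boolP (par l l')) => [pll | npll].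
  case: (line_nonempty l) => X Xl.
  case: (l =P l') => [<-|ne].
    case: (point_off l) => Y Yl.
    have XY : X != Y by apply/eqP => e; move: Yl; rewrite -e Xl.
    case: (join_ex XY) => k /andP [Xk Yk].
    have ne : l != k by apply/eqP => e; move: Yl; rewrite e Yk.
    by exists k; rewrite (meet_nopar Xl Xk ne).
  case: (line_nonempty l') => Y Yl'.
  have Yl : ~~ inc Y l by apply/negP => Yl; apply: ne; apply: (par_meet_eq pll Yl Yl').
  have Xl' : ~~ inc X l' by apply/negP => Xl'; apply: ne; apply: (par_meet_eq pll Xl Xl').
  have XY : X != Y by apply/eqP => e; move: Yl; rewrite -e Xl.
  case: (join_ex XY) => k /andP [Xk Yk].
  have ne1 : l != k by apply/eqP => e; move: Yl; rewrite e Yk.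
  have ne2 : l' != k by apply/eqP => e; move: Xl'; rewrite e Xk.
  by exists k; rewrite (meet_nopar Xl Xk ne1) (meet_nopar Yl' Yk ne2).
case: (nopar_meet npll) => X /andP [Xl Xl'].
have ll' : l != l' by apply/eqP => e; move: npll; rewrite e par_refl.
case: (line_two Xl) => A /andP [Al AX].
case: (line_two Xl') => B /andP [Bl' BX].
have Al' : ~~ inc A l'.
  by apply/negP => Al'; move: ll'; rewrite (join_uniq AX Al Xl Al' Xl') eqxx.
have Bl : ~~ inc B l.
  by apply/negP => Bl; move: ll'; rewrite (join_uniq BX Bl Xl Bl' Xl') eqxx.
have AB : A != B by apply/eqP => e; move: Bl; rewrite -e Al.
case: (join_ex AB) => k /andP [Ak Bk].
have ne1 : l != k by apply/eqP => e; move: Bl; rewrite e Bk.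
have ne2 : l' != k by apply/eqP => e; move: Al'; rewrite e Ak.
by exists k; rewrite (meet_nopar Al Ak ne1) (meet_nopar Bl' Bk ne2).
Qed.

Lemma class_size k : #|cls k| = #|pts k|.
Proof.
case: (line_nonempty k) => X Xk.
case: (point_off k) => Y Yk.
have XY : X != Y by apply/eqP => e; move: Yk; rewrite -e Xk.
case: (join_ex XY) => l /andP [Xl Yl].
have ne : l != k by apply/eqP => e; move: Yk; rewrite -e Yl.
by rewrite (class_card (meet_nopar Xl Xk ne)) (line_size_const l k).
Qed.

Lemma line_off P : exists l, ~~ inc P l.
Proof.
case: (point_ne P) => Q QP.
case: (join_ex QP) => L /andP [QL PL].
case: (point_off L) => R RL.
case: (par_ex R L) => l /andP [Rl Ll].
exists l; apply/negP => Pl.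
by move: RL; rewrite (par_meet_eq Ll PL Pl) Rl.
Qed.

Lemma lines_through_card P l0 : #|[set l | inc P l]| = #|pts l0|.+1.
Proof.
case: (line_off P) => l' Pl'.
rewrite (line_size_const l0 l').
rewrite -(cardsID (cls l') [set l | inc P l]) addnC.
have -> : [set l | inc P l] :&: cls l' = [set xchoose (par_ex P l')].
  apply/setP => l; rewrite !inE.
  have := xchooseP (par_ex P l'); set q := xchoose _ => /andP [Pq lq].
  apply/idP/eqP => [/andP [Pl ll] | ->]; last by rewrite Pq lq.
  exact: (par_uniq Pl ll Pq lq).
rewrite cards1 addn1; congr _.+1.
have gP Y : inc Y l' -> exists l, inc P l && inc Y l.
  by move=> Yl; apply: join_ex; apply/eqP => e; move: Pl'; rewrite e Yl.
pose g Y := odflt l' [pick l | inc P l && inc Y l].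
have gS Y : inc Y l' -> inc P (g Y) && inc Y (g Y).
  move=> /gP [l hl]; rewrite /g; case: pickP => //= h.
  by move: (h l); rewrite hl.
have ginj : {in pts l' &, injective g}.
  move=> Y Y'; rewrite !inE => Yl Yl' e.
  apply/eqP; apply/negP => /negP YY.
  case/andP: (gS Y Yl) => Pg Yg; case/andP: (gS Y' Yl') => _; rewrite -e => Y'g.
  by move: Pg; rewrite (join_uniq YY Yg Y'g Yl Yl') => Pg; rewrite Pg in Pl'.
rewrite -(card_in_imset ginj); apply: eq_card => l; rewrite !inE; apply/andP/imsetP.
  case=> nll Pl.
  case: (nopar_meet nll) => Y /andP [Yl' Yl].
  exists Y; first by rewrite inE.
  case/andP: (gS Y Yl') => Pg Yg.
  have PY : P != Y by apply/eqP => e; move: Pl'; rewrite e Yl'.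
  exact: (join_uniq PY Pl Yl Pg Yg).
case=> Y; rewrite inE => Yl' ->.
case/andP: (gS Y Yl') => Pg Yg; split => //.
rewrite par_sym; apply: (meet_nopar Yg Yl').
by apply/eqP => e; move: Pl'; rewrite -e Pg.
Qed.

End Aff.

Section HJ.
Variables (H A : IS) (fp : ipt H -> ipt A) (fl : iln H -> iln A).
Hypotheses (hA : affine_plane A) (hjH : forall P Q : ipt H, exists g, inc P g && inc Q g)
 (hinc : forall P g, inc P g -> inc (fp P) (fl g))
 (hnbp : forall P Q, fp P = fp Q <-> nbp P Q)
 (hnbl : forall g h, fl g = fl h <-> nbl g h)
 (hpar3 : forall g h, (forall P, ~~ (inc P g && inc P h)) -> par (fl g) (fl h))
 (hR : forall Pt : ipt H, affine_plane (restr Pt)).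
Variable rep : ipt A -> ipt H.
Hypothesis repE : forall P, fp (rep P) = P.
Variable m : nat.
Hypotheses (hm : forall L : iln A, #|pts L| = m) (hm2 : 2 <= m).

Lemma uniqH X Y g h : fp X != fp Y -> inc X g -> inc Y g -> inc X h -> inc Y h -> g = h.
Proof.
move=> ne Xg Yg Xh Yh.
have : ~~ nbp X Y by apply/negP => /hnbp /eqP; rewrite (negbTE ne).
rewrite /nbp negb_or -leqNgt => /andP [_ /card_le1P hle].
have gin : g \in [set g0 | inc X g0 && inc Y g0] by rewrite inE Xg Yg.
have := hle g gin h; rewrite !inE Xh Yh /= => /esym /eqP //.
Qed.

Lemma two_common g h X Y : X != Y -> inc X g -> inc X h -> inc Y g -> inc Y h -> fl g = fl h.
Proof.
move=> XY Xg Xh Yg Yh; apply/hnbl; apply/orP; right; apply/card_gt1P.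
by exists X, Y; rewrite !inE Xg Xh Yg Yh.
Qed.

Lemma nbp_two g h X Y : g != h -> inc X g -> inc X h -> inc Y g -> inc Y h -> fp X = fp Y.
Proof.
move=> gh Xg Xh Yg Yh; apply/hnbp; apply/orP; right; apply/card_gt1P.
by exists g, h; rewrite !inE Xg Xh Yg Yh.
Qed.

Lemma nbpE X Y : nbp X Y = (fp X == fp Y).
Proof. by apply/idP/eqP => /hnbp. Qed.

Lemma fiber g P : inc P (fl g) -> exists X, (fp X == P) && inc X g.
Proof.
move=> Pg.
case: (boolP [exists X, (fp X == P) && inc X g]) => [/existsP //|/existsPn hno].
case: (point_off hA (fl g)) => R Rl.
have PR : P != R by apply/eqP => e; move: Rl; rewrite -e Pg.
case: (join_ex hA PR) => M /andP [PM RM].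
have ne : fl g != M by apply/eqP => e; move: Rl; rewrite e RM.
case: (hjH (rep P) (rep R)) => k /andP [Xk Yk].
have ek : fl k = M.
  have h1 := hinc Xk; have h2 := hinc Yk; rewrite !repE in h1 h2.
  exact: (join_uniq hA PR h1 h2 PM RM).
have disj W : ~~ (inc W k && inc W g).
  apply/negP => /andP [Wk Wg].
  have W1 := hinc Wk; have W2 := hinc Wg; rewrite ek in W1.
  case: (fp W =P P) => [e|ne2]; first by move: (hno W); rewrite e eqxx Wg.
  have ne3 : fp W != P by apply/eqP.
  by move: ne; rewrite (join_uniq hA ne3 W2 Pg W1 PM) eqxx.
have := hpar3 disj; rewrite ek => pkg.
by move: ne; rewrite (par_meet_eq pkg PM Pg) eqxx.
Qed.

Lemma rline (Pt : ipt H) (g : iln H) (Z : ipt H) : nbp Pt Z -> inc Z g -> exists S : nb_ln Pt, val S = restr_line Pt g.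
Proof.
move=> hZ Zg.
have hne : restr_line Pt g != set0.
  by apply/set0Pn; exists (exist _ Z hZ); rewrite inE.
have hp : (restr_line Pt g != set0) && [exists g', restr_line Pt g == restr_line Pt g'].
  by rewrite hne; apply/existsP; exists g.
by exists (Sub (restr_line Pt g) hp : nb_ln Pt).
Qed.

Lemma KL (Pt : ipt H) (g h : iln H) (Z : ipt H) : nbp Pt Z -> inc Z g -> inc Z h ->
  (fl g = fl h <-> restr_line Pt g = restr_line Pt h).
Proof.
move=> hZ Zg Zh.
case: (g =P h) => [-> //|gh]; have gh' : g != h by apply/eqP.
case: (rline hZ Zg) => Sg eg; case: (rline hZ Zh) => Sh eh.
pose Zp : nb_pt Pt := exist _ Z hZ.
split.
  move/hnbl => /orP [/eqP e //| /card_gt1P [x [y [xin yin xy]]]].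
  have [W [Wg Wh WZ]] : exists W, [/\ inc W g, inc W h & W != Z].
    move: xin yin; rewrite !inE => /andP [xg xh] /andP [yg yh].
    case: (x =P Z) => [e|ne]; last by exists x; split => //; apply/eqP.
    by exists y; split => //; rewrite -e eq_sym.
  have eW : fp W = fp Z by apply: (nbp_two gh' Wg Wh Zg Zh).
  have hW : nbp Pt W by rewrite nbpE eW -nbpE.
  pose Wp : nb_pt Pt := exist _ W hW.
  have WpZp : Wp != Zp by [].
  have e : Sg = Sh.
    by apply: (join_uniq (hR Pt) WpZp); rewrite /= ?eg ?eh inE.
  by rewrite -eg -eh e.
move=> er.
have Zs : @inc (restr Pt) Zp Sg by rewrite /= eg inE.
case: (line_two (hR Pt) Zs) => Wp /andP [Ws WZ].
apply: (two_common (X := val Wp) (Y := Z)).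
- by apply: contra WZ => /eqP e; apply/eqP; apply: val_inj.
- by move: Ws; rewrite /= eg inE.
- by move: Ws; rewrite /= eg er inE.
- done.
- done.
Qed.


Lemma lift_ex (Pt : ipt H) (S : nb_ln Pt) : exists g, val S == restr_line Pt g.
Proof. by case/andP: (valP S) => _ /existsP. Qed.
Definition lift (Pt : ipt H) (S : nb_ln Pt) := xchoose (lift_ex S).
Lemma liftE (Pt : ipt H) (S : nb_ln Pt) : val S = restr_line Pt (lift S).
Proof. exact/eqP/(xchooseP (lift_ex S)). Qed.

Lemma lift_fl (Pt : ipt H) (g : iln H) (Z : ipt H) (S : nb_ln Pt) :
  nbp Pt Z -> inc Z g -> val S = restr_line Pt g -> fl (lift S) = fl g.
Proof.
move=> hZ Zg eS.
have Zl : inc Z (lift S).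
  have : (exist _ Z hZ : nb_pt Pt) \in val S by rewrite eS inE.
  by rewrite liftE inE.
by apply/(KL hZ Zl Zg); rewrite -liftE.
Qed.

Lemma nbp_refl (X : ipt H) : nbp X X.
Proof. by rewrite /nbp eqxx. Qed.

Definition pointP (P : ipt A) : nb_pt (rep P) := exist _ (rep P) (nbp_refl (rep P)).

Definition pi (P : ipt A) (l : iln A) : {set nb_ln (rep P)} := [set S | fl (lift S) == l].

Lemma nbrep P (Z : ipt H) : nbp (rep P) Z = (fp Z == P).
Proof. by rewrite nbpE repE eq_sym. Qed.

Lemma pi_same P l (S S' : nb_ln (rep P)) (Z : nb_pt (rep P)) :
  S \in pi P l -> S' \in pi P l -> Z \in val S -> Z \in val S' -> S = S'.
Proof.
rewrite !inE => /eqP e1 /eqP e2 ZS ZS'.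
apply: val_inj; rewrite !liftE; apply/(KL (valP Z)).
- by move: ZS; rewrite liftE inE.
- by move: ZS'; rewrite liftE inE.
by rewrite e1 e2.
Qed.

Lemma pi_through P l (Z : nb_pt (rep P)) : inc P l -> exists2 S, S \in pi P l & Z \in val S.
Proof.
move=> Pl.
have fZ : fp (val Z) = P by apply/eqP; rewrite -nbrep (valP Z).
case: (line_two hA Pl) => Y /andP [Yl YP].
case: (hjH (val Z) (rep Y)) => g /andP [Zg Yg].
have eg : fl g = l.
  have h1 := hinc Zg; have h2 := hinc Yg; rewrite fZ in h1; rewrite repE in h2.
  by apply: (join_uniq hA _ h1 h2 Pl Yl); rewrite eq_sym.
case: (rline (valP Z) Zg) => S eS.
exists S; last by rewrite eS inE.
by rewrite inE (lift_fl (valP Z) Zg eS) eg.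
Qed.

Lemma pi_par P l (S S' : nb_ln (rep P)) : S \in pi P l -> S' \in pi P l -> @par (restr (rep P)) S S'.
Proof.
move=> hS hS'; case: (S =P S') => [->|ne]; first exact: par_refl.
apply/orP; right; apply/forallP => Z; apply/negP => /andP [ZS ZS'].
by apply: ne; apply: (pi_same hS hS' ZS ZS').
Qed.

Lemma pi_class P l (S : nb_ln (rep P)) : inc P l -> S \in pi P l ->
  pi P l = [set S' | @par (restr (rep P)) S S'].
Proof.
move=> Pl hS; apply/setP => S'; rewrite [RHS]inE; apply/idP/idP; first exact: pi_par.
move=> pS.
case: (line_nonempty (hR (rep P)) S') => Z ZS'.
case: (pi_through Z Pl) => S'' hS'' ZS''.
have pS'' := pi_par hS hS''.
by rewrite (par_uniq (hR (rep P)) ZS' pS ZS'' pS'').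
Qed.

Lemma restr_order P (S : nb_ln (rep P)) : #|@pts (restr (rep P)) S| = m.
Proof.
pose G (S' : nb_ln (rep P)) := fl (lift S').
have Ginj : {in [set S' | @inc (restr (rep P)) (pointP P) S'] &, injective G}.
  move=> S1 S2; rewrite !inE => h1 h2 e.
  apply: val_inj; rewrite !liftE; apply/(KL (valP (pointP P))).
  - by move: h1; rewrite /= liftE inE.
  - by move: h2; rewrite /= liftE inE.
  - exact: e.
have e1 := lines_through_card (hR (rep P)) (pointP P) S.
case: (line_off hA P) => L0 _.
have e2 := lines_through_card hA P L0; rewrite hm in e2.
apply/eq_add_S; rewrite -e1 -e2 -(card_in_imset Ginj).
apply: eq_card => L; rewrite inE; apply/imsetP/idP.
  case=> S1; rewrite inE => h ->.
  have : inc (rep P) (lift S1) by move: h; rewrite /= liftE inE.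
  by move/hinc; rewrite repE.
move=> PL; case: (pi_through (pointP P) PL) => S1 h1 h2.
by exists S1; rewrite ?inE //; move: h1; rewrite inE => /eqP <-.
Qed.


Definition mm := m.-1.
Lemma mmE : mm.+1 = m.
Proof. by rewrite /mm prednK // ltnW. Qed.

Definition Sym (l : iln A) : finType := 'I_mm.+1.
Definition Row (l : iln A) : finType := {g : iln H | fl g == l}.

Lemma dflt_ex P : exists S : nb_ln (rep P), pointP P \in val S.
Proof.
case: (point_ne hA P) => Y YP.
case: (join_ex hA YP) => L /andP [_ PL].
by case: (pi_through (pointP P) PL) => S _ h; exists S.
Qed.
Definition dflt P := xchoose (dflt_ex P).
Definition rl P (g : iln H) : nb_ln (rep P) := insubd (dflt P) (restr_line (rep P) g).

Lemma rlE P g Z : nbp (rep P) Z -> inc Z g -> val (rl P g) = restr_line (rep P) g.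
Proof. by move=> hZ Zg; case: (rline hZ Zg) => S eS; rewrite /rl -eS valKd. Qed.

Definition beta P l (s : Sym l) : nb_ln (rep P) := nth (dflt P) (enum (pi P l)) s.
Definition O l (r : Row l) P : Sym l := inord (index (rl P (val r)) (enum (pi P l))).
Arguments beta P l s : clear implicits.
Arguments O l r P : clear implicits.

Lemma pi_card P l : inc P l -> #|pi P l| = m.
Proof.
move=> Pl; case: (pi_through (pointP P) Pl) => S hS _.
rewrite (pi_class Pl hS) -[RHS](restr_order S).
exact: (class_size (hR (rep P)) S).
Qed.

Lemma size_enum_pi P l : inc P l -> size (enum (pi P l)) = mm.+1.
Proof. by move=> Pl; rewrite -cardE pi_card // mmE. Qed.

Lemma rl_pi P (g : iln H) Z : nbp (rep P) Z -> inc Z g -> rl P g \in pi P (fl g).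
Proof. by move=> hZ Zg; rewrite inE (lift_fl hZ Zg (rlE hZ Zg)). Qed.

Lemma rl_restr P l (r : Row l) : inc P l ->
  val (rl P (val r)) = restr_line (rep P) (val r) /\ rl P (val r) \in pi P l.
Proof.
move=> Pl.
have el : fl (val r) = l := eqP (valP r).
have Pl' : inc P (fl (val r)) by rewrite el.
case: (fiber Pl') => X /andP [/eqP fX Xr].
have hX : nbp (rep P) X by rewrite nbrep fX.
by split; [exact: rlE hX Xr | have := rl_pi hX Xr; rewrite el].
Qed.

Lemma betaO P l (r : Row l) : inc P l -> beta P l (O l r P) = rl P (val r).
Proof.
move=> Pl; case: (rl_restr r Pl) => _ hin.
rewrite /beta /O inordK ?nth_index ?mem_enum //.
by rewrite -(size_enum_pi Pl) index_mem mem_enum.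
Qed.

Lemma beta_inj P l : inc P l -> injective (beta P l).
Proof.
move=> Pl s t e; apply: val_inj => /=; apply/eqP.
rewrite -(nth_uniq (dflt P) _ _ (enum_uniq (pi P l))) ?size_enum_pi //.
by rewrite /beta in e; rewrite e.
Qed.

Lemma beta_img P l : inc P l -> forall y, y \in pi P l <-> exists s, beta P l s = y.
Proof.
move=> Pl y; split.
  move=> yin; exists (inord (index y (enum (pi P l)))).
  rewrite /beta inordK ?nth_index ?mem_enum //.
  by rewrite -(size_enum_pi Pl) index_mem mem_enum.
case=> s <-; rewrite /beta -mem_enum mem_nth // size_enum_pi //.
Qed.

Lemma OA l P Q : P != Q -> inc P l -> inc Q l ->
  forall s t : Sym l, exists! r : Row l, O l r P = s /\ O l r Q = t.
Proof.
move=> PQ Pl Ql s t.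
have ha : beta P l s \in pi P l by apply/(beta_img Pl); exists s.
have hb : beta Q l t \in pi Q l by apply/(beta_img Ql); exists t.
case: (line_nonempty (hR (rep P)) (beta P l s)) => X Xa.
case: (line_nonempty (hR (rep Q)) (beta Q l t)) => Y Yb.
have fX : fp (val X) = P by apply/eqP; rewrite -nbrep (valP X).
have fY : fp (val Y) = Q by apply/eqP; rewrite -nbrep (valP Y).
case: (hjH (val X) (val Y)) => g /andP [Xg Yg].
have eg : fl g == l.
  have h1 := hinc Xg; have h2 := hinc Yg; rewrite fX in h1; rewrite fY in h2.
  by rewrite (join_uniq hA PQ h1 h2 Pl Ql).
pose r : Row l := Sub g eg.
have key R (Z : nb_pt (rep R)) (b : nb_ln (rep R)) u : inc R l -> b \in pi R l ->
    Z \in val b -> inc (val Z) g -> b = beta R l u -> O l r R = u.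
  move=> Rl hbin Zb Zg ebu.
  apply: (beta_inj Rl); rewrite betaO //= -ebu.
  case: (rl_restr r Rl) => e hin.
  apply: (pi_same hin hbin _ Zb).
  by rewrite e inE.
exists r; split.
  split.
  - exact: (key P X (beta P l s) s Pl ha Xa Xg).
  - exact: (key Q Y (beta Q l t) t Ql hb Yb Yg).
move=> r' [e1 e2].
apply: val_inj => /=.
have inc_r' R (Z : nb_pt (rep R)) u : inc R l -> O l r' R = u -> Z \in val (beta R l u) -> inc (val Z) (val r').
  move=> Rl eu Zb.
  case: (rl_restr r' Rl) => e _.
  by move: Zb; rewrite -eu betaO // e inE.
have Xr' := inc_r' P X s Pl e1 Xa.
have Yr' := inc_r' Q Y t Ql e2 Yb.
by apply: (uniqH (X := val X) (Y := val Y)); rewrite ?fX ?fY.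
Qed.

Lemma Row_card l : #|Row l| = m * m.
Proof.
case: (line_nonempty hA l) => P Pl.
case: (line_two hA Pl) => Q /andP [Ql QP].
have PQ : P != Q by rewrite eq_sym.
pose F (r : Row l) : (Sym l * Sym l)%type := (O l r P, O l r Q).
have Finj : injective F.
  move=> r1 r2 e.
  case: (OA PQ Pl Ql (O l r1 P) (O l r1 Q)) => r0 [_ u].
  have h1 : O l r1 P = O l r2 P := congr1 fst e.
  have h2 : O l r1 Q = O l r2 Q := congr1 snd e.
  have e1 := u r1 (conj erefl erefl).
  have e2 := u r2 (conj (esym h1) (esym h2)).
  by rewrite -e1 -e2.
rewrite -cardsT -(card_imset _ Finj).
have -> : [set F x | x in [set: Row l]] = [set: (Sym l * Sym l)%type].
  apply/setP => -[s t]; rewrite inE; apply/imsetP.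
  case: (OA PQ Pl Ql s t) => r [[h1 h2] _].
  by exists r; rewrite ?inE // /F h1 h2.
by rewrite cardsT card_prod card_ord mmE.
Qed.

Lemma final : exists (m0 : nat) (A0 : IS) (AP : ipt A0 -> IS) (Sym0 Row0 : iln A0 -> finType)
    (O0 : forall l, Row0 l -> ipt A0 -> Sym0 l)
    (pi0 : forall P : ipt A0, iln A0 -> {set iln (AP P)})
    (beta0 : forall (P : ipt A0) (l : iln A0), Sym0 l -> iln (AP P)),
    @admissible m0 A0 AP Sym0 Row0 O0 pi0 beta0 /\ isomorphic H (@construction A0 AP Sym0 Row0 O0 beta0).
Proof.
exists m, A, (fun P => restr (rep P)), Sym, Row, (@O), pi, beta.
split.
  split.
    split.
    - exact: hm2.
    - by split; [exact: hA | exact: hm].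
    - by move=> P; split; [exact: hR | exact: restr_order].
  split.
  - move=> l; split; first by rewrite card_ord mmE.
      exact: Row_card.
    exact: OA.
  - move=> P; split.
    + move=> l Pl; case: (pi_through (pointP P) Pl) => S hS _.
      by exists S; exact: pi_class.
    + move=> l l' Pl Pl' e.
      case: (pi_through (pointP P) Pl) => S hS _.
      move: (hS); rewrite e !inE => /eqP <-; move: hS; rewrite inE => /eqP.
      done.
    + move=> C [S0 ->].
      case: (par_ex (hR (rep P)) (pointP P) S0) => S1 /andP [PS1 p01].
      exists (fl (lift S1)); split.
        have : inc (rep P) (lift S1) by move: PS1; rewrite /= liftE inE.
        by move/hinc; rewrite repE.
      have hS1 : S1 \in pi P (fl (lift S1)) by rewrite inE.
      have Pl : inc P (fl (lift S1)).
        have : inc (rep P) (lift S1) by move: PS1; rewrite /= liftE inE.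
        by move/hinc; rewrite repE.
      rewrite (pi_class Pl hS1); apply/setP => S'; rewrite !inE.
      apply/idP/idP => h.
        exact: (par_trans (hR (rep P)) p01 h).
      apply: (par_trans (hR (rep P)) _ h).
      by rewrite par_sym.
  - by move=> P l Pl; split; [exact: beta_inj | exact: beta_img].
have hX (X : ipt H) : nbp (rep (fp X)) X by rewrite nbrep.
pose f (X : ipt H) : {P : ipt A & nb_pt (rep P)} := existT _ (fp X) (exist _ X (hX X)).
pose gl (L : iln H) : {l : iln A & Row l} := existT _ (fl L) (exist _ L (eqxx (fl L)) : Row (fl L)).
exists f, gl; split.
- exists (fun Y : {P : ipt A & nb_pt (rep P)} => proj1_sig (projT2 Y)) => [X //|].
  case=> P [x hx] /=.
  have e : fp x = P by move: hx; rewrite nbrep => /eqP.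
  subst P.
  by rewrite /f (bool_irrelevance (hX x) hx).
- exists (fun Y : {l : iln A & Row l} => proj1_sig (projT2 Y)) => [L //|].
  case=> l [g hg] /=.
  have e : fl g = l := eqP hg.
  subst l.
  by rewrite /gl (bool_irrelevance (eqxx (fl g)) hg).
move=> X L /=.
case: (boolP (inc (fp X) (fl L))) => h /=.
  rewrite betaO //.
  case: (rl_restr (exist _ L (eqxx _) : Row (fl L)) h) => e _.
  by rewrite e inE.
by apply/negbTE; apply: contra h; exact: hinc.
Qed.

End HJ.

Theorem mainTheorem3 (H : IS) :
  two_uniform_AH H ->
  exists (m : nat) (A : IS) (AP : ipt A -> IS) (Sym Row : iln A -> finType)
    (O : forall l, Row l -> ipt A -> Sym l)
    (pi : forall P : ipt A, iln A -> {set iln (AP P)})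
    (beta : forall (P : ipt A) (l : iln A), Sym l -> iln (AP P)),
    @admissible m A AP Sym Row O pi beta /\ isomorphic H (@construction A AP Sym Row O beta).
Proof.
case=> [[hj [A [fp [fl [[hA sfp _ hinc] [hnbp hnbl hpar]]]]]] hR'].
have hR Pt : affine_plane (restr Pt) := (hR' Pt).1.
have hs P : exists X, fp X == P by case: (sfp P) => X e; exists X; rewrite e.
pose rep P := xchoose (hs P).
have repE P : fp (rep P) = P := eqP (xchooseP (hs P)).
have hA' := hA; case: hA' => _ _ [P0 [Q0 [R0 [PQ _ _ _]]]].
case: (join_ex hA PQ) => L0 _.
have hm L : #|pts L| = #|pts L0| := line_size_const hA L L0.
have hm2 : 2 <= #|pts L0|.
  case: (line_nonempty hA L0) => X XL.
  case: (line_two hA XL) => Y /andP [YL YX].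
  by apply/card_gt1P; exists X, Y; rewrite !inE XL YL eq_sym YX.
exact: (final hA hj hinc hnbp hnbl hpar hR repE hm hm2).
Qed.
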